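(* Let $V$ be a finite-dimensional real vector space, $\sigma\subset V$ a strictly convex polyhedral cone, $\tau$ a face of $\sigma$, and $P\colon V\to V/\mathrm{lin}(\tau)$ the projection. If $\sigma=\sigma_1\cup\dots\cup\sigma_r$ with polyhedral cones $\sigma_i$, then $P(\sigma)$ is the union of all $P(\sigma_i)$ for which $\tau^{\circ}\cap\sigma_i\neq\emptyset$.
   Context: $\mathrm{lin}(\tau)$ is the linear span of $\tau$ and $\tau^{\circ}$ its relative interior. *)

(* Defs.v *)
From HB Require Import structures.
From mathcomp Require Import all_boot all_order all_algebra.
From mathcomp Require Import boolp classical_sets reals.
Set Implicit Arguments. Unset Strict Implicit. Unset Printing Implicit Defensive.
Import Order.TTheory GRing.Theory Num.Theory.
Local Open Scope ring_scope.
Local Open Scope classical_set_scope.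

Section Cones.
Variables (R : realType) (n : nat).
Notation V := 'rV[R]_n.

Definition dotv (u x : V) : R := (u *m x^T) 0 0.

Definition cone_gen (s : seq V) : set V :=
  [set x | exists c : 'I_(size s) -> R,
     (forall i, 0 <= c i) /\ x = \sum_(i < size s) c i *: s`_i].

Definition polyhedral_cone (C : set V) : Prop := exists s : seq V, C = cone_gen s.

Definition strictly_convex (C : set V) : Prop :=
  forall x, C x -> C (- x) -> x = 0.

Definition face_of (tau sigma : set V) : Prop :=
  exists u : V, (forall x, sigma x -> 0 <= dotv u x) /\
    tau = [set x | sigma x /\ dotv u x = 0].

Definition lin (A : set V) : set V :=
  [set x | exists (s : seq V) (c : 'I_(size s) -> R),
     (forall i : 'I_(size s), A s`_i) /\ x = \sum_(i < size s) c i *: s`_i].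

Definition relint (A : set V) : set V :=
  [set x | A x /\ exists e : R, 0 < e /\
     forall y, lin A y -> (forall j, `|y 0 j - x 0 j| < e) -> A y].

(* P : V -> V / L the quotient projection; P x = P y iff x - y ∈ L.
   proj_preimage L A = P^{-1}(P(A)) = A + L. *)
Definition proj_preimage (L A : set V) : set V :=
  [set x | exists y, A y /\ L (x - y)].

End Cones.

(* Main.v *)
Require Import Defs.
From HB Require Import structures.
From mathcomp Require Import all_boot all_order all_algebra.
From mathcomp Require Import boolp classical_sets reals.
From mathcomp Require Import ring lra.
Import Order.TTheory GRing.Theory Num.Theory.
Local Open Scope ring_scope.
Local Open Scope classical_set_scope.
Set Implicit Arguments. Unset Strict Implicit. Unset Printing Implicit Defensive.

Section Aux.
Variables (R : realType) (n : nat).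
Local Notation V := 'rV[R]_n.

Lemma dotvE (u x : V) : dotv u x = \sum_k u 0 k * x 0 k.
Proof. by rewrite /dotv !mxE; apply: eq_bigr => k _; rewrite !mxE. Qed.

Lemma dotvD (u x y : V) : dotv u (x + y) = dotv u x + dotv u y.
Proof. rewrite !dotvE -big_split /=; apply: eq_bigr => k _; by rewrite mxE mulrDr. Qed.

Lemma dotvZ (u x : V) c : dotv u (c *: x) = c * dotv u x.
Proof. rewrite !dotvE mulr_sumr; apply: eq_bigr => k _; by rewrite mxE mulrCA. Qed.

Lemma dotvN (u x : V) : dotv u (- x) = - dotv u x.
Proof. by rewrite -scaleN1r dotvZ mulN1r. Qed.

Lemma dotvB (u x y : V) : dotv u (x - y) = dotv u x - dotv u y.
Proof. by rewrite dotvD dotvN. Qed.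

Lemma dotv0 (u : V) : dotv u 0 = 0.
Proof. by rewrite -(scale0r (0:V)) dotvZ mul0r. Qed.

Lemma dotv_sum (u : V) k (F : 'I_k -> V) : dotv u (\sum_i F i) = \sum_i dotv u (F i).
Proof.
elim/big_rec2: _ => [|i y1 y2 _ <-]; first exact: dotv0.
by rewrite dotvD.
Qed.

Lemma cone0 (s : seq V) : cone_gen s 0.
Proof. exists (fun _ => 0); split => // ; by rewrite big1 // => i _; rewrite scale0r. Qed.

Lemma cone_nth (s : seq V) (j : 'I_(size s)) : cone_gen s s`_j.
Proof.
exists (fun i => (i == j)%:R); split; first by move=> i; case: (i == j).
rewrite (bigD1 j) //= eqxx scale1r big1 ?addr0 // => i /negbTE ->.
by rewrite scale0r.
Qed.

Lemma coneD (s : seq V) x y : cone_gen s x -> cone_gen s y -> cone_gen s (x + y).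
Proof.
move=> [a [a0 ->]] [b [b0 ->]]; exists (fun i => a i + b i); split.
  by move=> i; rewrite addr_ge0.
by rewrite -big_split; apply: eq_bigr => i _; rewrite scalerDl.
Qed.

Lemma coneZ (s : seq V) c x : 0 <= c -> cone_gen s x -> cone_gen s (c *: x).
Proof.
move=> c0 [a [a0 ->]]; exists (fun i => c * a i); split.
  by move=> i; rewrite mulr_ge0.
by rewrite scaler_sumr; apply: eq_bigr => i _; rewrite scalerA.
Qed.

Lemma lin_fin (A : set V) k (f : 'I_k -> V) (c : 'I_k -> R) :
  (forall i, A (f i)) -> lin A (\sum_(i < k) c i *: f i).
Proof.
move=> Af; exists (map f (enum 'I_k)).
have Hs : size (map f (enum 'I_k)) = k by rewrite size_map size_enum_ord.
have Hn : forall i : 'I_k, (map f (enum 'I_k))`_i = f i.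
  move=> i; rewrite (nth_map i) ?nth_ord_enum // size_enum_ord; exact: ltn_ord.
move: (map f (enum 'I_k)) Hs Hn => s Hs Hn; subst k.
exists c; split; first by move=> i; rewrite Hn.
by apply: eq_bigr => i _; rewrite Hn.
Qed.

Lemma le_sum1 (I : finType) (F : I -> R) j : (forall i, 0 <= F i) -> F j <= \sum_i F i.
Proof.
move=> F0; rewrite (bigD1 j) //= lerDl; exact: sumr_ge0.
Qed.

Section Face.
Variables (s : seq V) (u : V).
Hypothesis hu : forall x, cone_gen s x -> 0 <= dotv u x.
Local Notation tau := [set x | cone_gen s x /\ dotv u x = 0].

Definition bA : 'I_(size s) -> R := fun j => if dotv u s`_j == 0 then 1 else 0.
Definition Amx : 'M[R]_(size s, n) := \matrix_(j < size s) (bA j *: s`_j).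

Lemma rowA j : row j Amx = bA j *: s`_j.
Proof. by rewrite rowK. Qed.

Lemma tau_comb (w : 'rV[R]_(size s)) : (forall j, 0 <= w 0 j) -> tau (w *m Amx).
Proof.
move=> w0; rewrite mulmx_sum_row.
have E : \sum_i w 0 i *: row i Amx = \sum_i (w 0 i * bA i) *: s`_i.
  by apply: eq_bigr => i _; rewrite rowA scalerA.
rewrite E; split.
  exists (fun i => w 0 i * bA i); split => // i.
  by rewrite mulr_ge0 // /bA; case: ifP.
rewrite dotv_sum big1 // => i _; rewrite dotvZ /bA.
by case: ifP => [/eqP ->|_]; rewrite ?mulr0 ?mul0r ?mulr0.
Qed.

Lemma tau_sub x : tau x -> exists w, x = w *m Amx.
Proof.
move=> [[d [d0 ->]] hx].
have hs : forall j : 'I_(size s), 0 <= dotv u s`_j by move=> j; apply: hu; exact: cone_nth.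
have hz : forall j : 'I_(size s), d j * dotv u s`_j = 0.
  move: hx; rewrite dotv_sum => hx j.
  have h0 : forall i, xpredT i -> 0 <= dotv u (d i *: s`_i).
    by move=> i _; rewrite dotvZ mulr_ge0.
  by have := @psumr_eq0P _ _ xpredT (fun i => dotv u (d i *: s`_i)) h0 hx j isT; rewrite dotvZ.
exists (\row_j d j); rewrite mulmx_sum_row; apply: eq_bigr => j _.
rewrite rowA mxE scalerA /bA; case: ifP => [_|hne]; first by rewrite mulr1.
have := hz j; move/eqP; rewrite mulf_eq0; case/orP => [/eqP ->|]; first by rewrite mul0r.
by move=> h; rewrite h in hne.
Qed.

Lemma lin_sub x : lin tau x -> exists w, x = w *m Amx.
Proof.
move=> [s' [c [hs' ->]]].
have [W hW] := choice (fun i : 'I_(size s') => tau_sub (hs' i)).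
exists (\sum_i c i *: W i); rewrite mulmx_suml; apply: eq_bigr => i _.
by rewrite -scalemxAl -hW.
Qed.

Lemma sub_lin w : lin tau (w *m Amx).
Proof.
rewrite mulmx_sum_row; apply: lin_fin => j.
have -> : row j Amx = (delta_mx 0 j) *m Amx by rewrite rowE.
apply: tau_comb => k; rewrite mxE; by case: (_ == _).
Qed.

Definition Pmx := pinvmx Amx.
Definition Ssum := \sum_j \sum_k `|Pmx k j|.
Definition eps := (1 + Ssum)^-1.
Definition tpt : 'rV[R]_n := const_mx 1 *m Amx.

Lemma Ssum_ge0 : 0 <= Ssum.
Proof. by apply: sumr_ge0 => j _; apply: sumr_ge0. Qed.

Lemma eps_gt0 : 0 < eps.
Proof. rewrite /eps invr_gt0; have := Ssum_ge0; lra. Qed.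

Lemma epsS : eps * Ssum < 1.
Proof.
have h : eps * (1 + Ssum) = 1 by rewrite /eps mulVf //; have := Ssum_ge0; lra.
have := eps_gt0; rewrite mulrDr mulr1 in h; lra.
Qed.

Lemma tpt_tau : tau tpt.
Proof. by apply: tau_comb => j; rewrite mxE. Qed.

Lemma core y : lin tau y -> (forall k, `|y 0 k - tpt 0 k| < eps) -> tau y.
Proof.
move=> /lin_sub [wy ->] hy.
set d := wy *m Amx - tpt.
have dA : (d <= Amx)%MS by apply/submxP; exists (wy - const_mx 1); rewrite mulmxBl.
set w := d *m Pmx.
have hw : d = w *m Amx by rewrite /w mulmxKpV.
have -> : wy *m Amx = (const_mx 1 + w) *m Amx by rewrite mulmxDl -hw /d /tpt addrC subrK.
apply: tau_comb => j.
have -> : (const_mx 1 + w) 0 j = 1 + w 0 j by rewrite !mxE.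
have hwj : `|w 0 j| < 1.
  rewrite /w mxE; apply: (le_lt_trans (ler_norm_sum _ _ _)).
  apply: (le_lt_trans _ epsS); apply: (@le_trans _ _ (\sum_k eps * `|Pmx k j|)).
    apply: ler_sum => k _; rewrite normrM; apply: ler_wpM2r => //.
    apply: ltW; have := hy k; by rewrite /d !mxE.
  rewrite -mulr_sumr; apply: ler_wpM2l; first exact: ltW eps_gt0.
  rewrite /Ssum; apply: (@le_sum1 _ (fun j => \sum_k `|Pmx k j|) j) => i; exact: sumr_ge0.
move: hwj; rewrite ltr_norml => /andP [h1 _]; lra.
Qed.

Lemma relint_near a : tau a -> (forall k, `|a 0 k - tpt 0 k| < eps / 2) -> relint tau a.
Proof.
move=> ha hk; split => //; exists (eps / 2); split; first by have := eps_gt0; lra.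
move=> y hy hyk; apply: core => // k.
have := ler_distD (a 0 k) (y 0 k) (tpt 0 k).
have := hk k; have := hyk k; lra.
Qed.
End Face.
End Aux.


Theorem lemma1p5 (R : realType) (n : nat) (sigma tau : set 'rV[R]_n)
  (r : nat) (sig : 'I_r -> set 'rV[R]_n) :
  polyhedral_cone sigma -> strictly_convex sigma -> face_of tau sigma ->
  (forall i, polyhedral_cone (sig i)) ->
  sigma = \bigcup_(i in [set: 'I_r]) sig i ->
  proj_preimage (lin tau) sigma =
  \bigcup_(i in [set i | relint tau `&` sig i !=set0])
     proj_preimage (lin tau) (sig i).
Proof.
move=> [s hs] _ [u [hu htau]] hpoly hcov; subst sigma tau.
have [G hG] := choice hpoly.
have subsig : forall i x, sig i x -> cone_gen s x.
  by move=> i x hx; rewrite hcov; exists i.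
have hgen : forall i (j : 'I_(size (G i))), 0 <= dotv u (G i)`_j.
  by move=> i j; apply: hu; apply: (subsig i); rewrite hG; exact: cone_nth.
apply/seteqP; split; last first.
  move=> x [i _ [y [hy hL]]]; exists y; split => //; exact: (subsig i).
move=> x [y [ys hxy]].
set M := \sum_i \sum_(j < size (G i)) \sum_k `|(G i)`_j 0 k| / `|dotv u (G i)`_j|.
have hM : forall i (j : 'I_(size (G i))) k, `|(G i)`_j 0 k| / `|dotv u (G i)`_j| <= M.
  move=> i j k.
  pose T := fun i (j : 'I_(size (G i))) k => `|(G i)`_j 0 k| / `|dotv u (G i)`_j|.
  have T0 : forall i j k, 0 <= T i j k by move=> *; rewrite /T divr_ge0.
  apply: (le_trans (@le_sum1 _ _ (fun k => T i j k) k (fun k => T0 i j k))).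
  apply: (le_trans (@le_sum1 _ _ (fun j => \sum_k T i j k) j _)).
    by move=> j'; apply: sumr_ge0.
  apply: (@le_sum1 _ _ (fun i => \sum_(j < size (G i)) \sum_k T i j k) i _).
  by move=> i'; apply: sumr_ge0 => j' _; apply: sumr_ge0.
have M0 : 0 <= M.
  by apply: sumr_ge0 => i _; apply: sumr_ge0 => j _; apply: sumr_ge0 => k _; rewrite divr_ge0.
set Ny := \sum_k `|y 0 k|.
have Ny0 : 0 <= Ny by apply: sumr_ge0.
have hNy : forall k, `|y 0 k| <= Ny by move=> k; apply: (@le_sum1 _ _ (fun k => `|y 0 k|) k).
set uy := dotv u y.
have uy0 : 0 <= uy by apply: hu.
set e := eps s u.
have e0 : 0 < e by apply: eps_gt0.
set D := 1 + Ny + M * uy.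
have MU : 0 <= M * uy by apply: mulr_ge0.
have D0 : 0 < D by rewrite /D; lra.
set del := (e / 2) / D.
have del0 : 0 < del by rewrite /del divr_gt0 //; lra.
have delD : del * (Ny + M * uy) < e / 2.
  have h : del * D = e / 2 by rewrite /del mulfVK //; rewrite gt_eqF.
  move: h; rewrite /D; lra.
set t := tpt s u.
have ht := tpt_tau s u.
set z := t + del *: y.
have hz : cone_gen s z by apply: coneD; [case: ht | apply: coneZ => //; lra].
move: (hz); rewrite {1}hcov => -[i _ hzi].
move: (hzi); rewrite hG => -[c [c0 zE]].
case: ht => ht1 ht2.
pose P := fun j : 'I_(size (G i)) => dotv u (G i)`_j == 0.
pose a := \sum_j (if P j then c j else 0) *: (G i)`_j.
pose b := \sum_j (if P j then 0 else c j) *: (G i)`_j.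
have zab : z = a + b.
  rewrite zE /a /b -big_split; apply: eq_bigr => j _.
  by case: (P j); rewrite /= scale0r ?addr0 ?add0r.
have ai : sig i a.
  rewrite hG; exists (fun j => if P j then c j else 0); split => // j.
  by case: (P j).
have atau : cone_gen s a /\ dotv u a = 0.
  split; first exact: subsig ai.
  rewrite dotv_sum big1 // => j _; rewrite dotvZ /P.
  by case: ifP => [/eqP ->|_]; rewrite ?mulr0 ?mul0r.
have uz : dotv u z = del * uy by rewrite /z dotvD dotvZ ht2 add0r.
have hb : forall k, `|b 0 k| <= del * uy * M.
  move=> k; rewrite /b summxE.
  apply: (le_trans (ler_norm_sum _ _ _)).
  apply: (@le_trans _ _ (\sum_j c j * dotv u (G i)`_j * M)).
    apply: ler_sum => j _; rewrite mxE normrM.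
    case: ifP => hP; first by rewrite normr0 mul0r mulr_ge0 // mulr_ge0.
    have gpos : 0 < dotv u (G i)`_j by rewrite lt_def hgen andbT; apply: negbT.
    rewrite ger0_norm // -mulrA ler_wpM2l //.
    by have := hM i j k; rewrite (ger0_norm (ltW gpos)) ler_pdivrMr // mulrC.
  rewrite -mulr_suml; apply: ler_wpM2r => //.
  rewrite -uz zE dotv_sum; rewrite le_eqVlt; apply/orP; left; apply/eqP; apply: eq_bigr => j _; by rewrite dotvZ.
have hat : forall k, `|a 0 k - t 0 k| < e / 2.
  move=> k.
  have E : a 0 k - t 0 k = del * y 0 k - b 0 k.
    have := congr1 (fun m : 'rV_n => m 0 k) zab; rewrite /z /= mxE [(del *: y) 0 k]mxE [(a + b) 0 k]mxE.
    move=> h; rewrite -[a 0 k](addrK (b 0 k)) -h; ring.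
  rewrite E; apply: (le_lt_trans (ler_normB _ _)); rewrite normrM gtr0_norm //.
  have h1 : del * `|y 0 k| <= del * Ny by apply: ler_wpM2l; [exact: ltW|exact: hNy].
  have h2 := hb k.
  have h3 : del * (Ny + M * uy) = del * Ny + del * uy * M by ring.
  lra.
have arel := relint_near hu atau hat.
exists i; first by exists a.
exists (del^-1 *: z); split.
  by rewrite hG; apply: coneZ; [rewrite invr_ge0; exact: ltW | rewrite -hG].
have -> : x - del^-1 *: z = (x - y) - del^-1 *: t.
  rewrite /z scalerDr scalerA mulVf ?scale1r; last by rewrite gt_eqF.
  by rewrite opprD addrA addrAC.
have [w1 hw1] := lin_sub hu hxy.
rewrite hw1 /t /tpt scalemxAl -mulmxBl; exact: sub_lin.
Qed.
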